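(* Let $\beta>2\alpha>0$ and let $\varphi_N:\mathbb{R}^{s_N}\to\mathbb{R}$ be $\varphi_N(x)=\frac12x^TAx-\sum_{k=1}^{s_N}\log\cosh(x^TAe_k)$. The Hessian matrix of $\varphi_N$ at $x=(0,\dots,0)$ is positive definite if $\beta+2\alpha<1$, positive semi-definite if $\beta+2\alpha=1$, and not positive (semi-)definite if $\beta+2\alpha>1$.
   Context: $A$ is the $s_N\times s_N$ symmetric circulant matrix $A=\beta I+\alpha(P+P^T)$, where $P$ is the cyclic shift matrix (so $A_{kk}=\beta$, $A_{k,k\pm1}=\alpha$ with indices mod $s_N$); $e_k$ are the standard basis vectors of $\mathbb{R}^{s_N}$. *)

(* Defs.v *)
From HB Require Import structures.
From mathcomp Require Import all_boot all_order all_algebra.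
From mathcomp Require Import all_classical all_reals all_analysis.
Unset Printing Implicit Defensive.
Import Order.TTheory GRing.Theory Num.Theory.
Import numFieldNormedType.Exports.
Local Open Scope ring_scope.

Definition cosh {R : realType} (x : R) : R := (expR x + expR (- x)) / 2.

Definition shift_mx {R : realType} (n : nat) : 'M[R]_n :=
  \matrix_(i, j) ((j == ordS i)%:R).

Definition circA {R : realType} (n : nat) (alpha beta : R) : 'M[R]_n :=
  beta%:M + alpha *: (shift_mx n + (shift_mx n)^T).

Definition ebasis {R : realType} (n : nat) (k : 'I_n) : 'cV[R]_n := delta_mx k 0.

Definition phiN {R : realType} (n : nat) (alpha beta : R) (x : 'cV[R]_n) : R :=
  2^-1 * (x^T *m circA n alpha beta *m x) 0 0
  - \sum_(k < n) ln (cosh ((x^T *m circA n alpha beta *m ebasis n k) 0 0)).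

Definition hessian {R : realType} (n : nat) (f : 'cV[R]_n -> R) (x : 'cV[R]_n) : 'M[R]_n :=
  \matrix_(i, j) ('D_(ebasis n i) (fun y => 'D_(ebasis n j) f y) x).

Definition posdef {R : realType} (n : nat) (H : 'M[R]_n) : Prop :=
  forall v : 'cV[R]_n, v != 0 -> 0 < (v^T *m H *m v) 0 0.

Definition possemidef {R : realType} (n : nat) (H : 'M[R]_n) : Prop :=
  forall v : 'cV[R]_n, 0 <= (v^T *m H *m v) 0 0.

(* Main.v *)
Require Import Defs.
From HB Require Import structures.
From mathcomp Require Import all_boot all_order all_algebra.
From mathcomp Require Import all_classical all_reals all_analysis.
From mathcomp Require Import ring lra.
From mathcomp Require Import fingroup perm.
Import Order.TTheory GRing.Theory Num.Theory.
Import numFieldNormedType.Exports.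
Local Open Scope ring_scope.

Section An.
Variable R : realType.

Lemma Dline (V : normedModType R) (f : V -> R) (x v : V) :
  'D_v f x = 'D_1 (fun h : R => f (h *: v + x)) 0.
Proof.
rewrite /derive /=; f_equal; f_equal; apply/funext => h /=.
by rewrite addr0 scale0r add0r [_%:A]mulr1.
Qed.

Definition sh (x : R) := (expR x - expR (- x)) / 2.
Definition th (x : R) := sh x / cosh x.

Lemma cosh_gt0 (x : R) : 0 < cosh x.
Proof. by rewrite /cosh divr_gt0 // addr_gt0 // expR_gt0. Qed.

Lemma der_expN (x : R) : is_derive x 1 (fun y => expR (- y)) (- expR (- x)).
Proof.
have := @is_derive1_comp R expR -%R x (expR (-x)) (-1) _ _.
rewrite mulrN1; apply; by [exact: is_derive_expR | exact: is_deriveNid].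
Qed.

Lemma der_cosh (x : R) : is_derive x 1 (@cosh R) (sh x).
Proof.
have h : is_derive x 1 (fun y => 2^-1 *: (expR y + expR (- y))) (2^-1 *: (expR x - expR (- x))).
  apply: (@is_deriveZ R R R (fun y => expR y + expR (- y))).
  exact: (is_deriveD (is_derive_expR x) (der_expN x)).
have -> : @cosh R = (fun y => 2^-1 *: (expR y + expR (- y))).
  by apply/funext => y; rewrite /cosh /= [RHS]mulrC.
by apply: is_derive_eq h _; rewrite /sh [RHS]mulrC.
Qed.

Lemma der_sh (x : R) : is_derive x 1 sh (cosh x).
Proof.
have h : is_derive x 1 (fun y => 2^-1 *: (expR y - expR (- y))) (2^-1 *: (expR x - - expR (- x))).
  apply: (@is_deriveZ R R R (fun y => expR y - expR (- y))).
  exact: (is_deriveB (is_derive_expR x) (der_expN x)).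
have -> : sh = (fun y => 2^-1 *: (expR y - expR (- y))).
  by apply/funext => y; rewrite /sh /= [RHS]mulrC.
by apply: is_derive_eq h _; rewrite /cosh opprK [RHS]mulrC.
Qed.

Lemma der_lncosh (x : R) : is_derive x 1 (fun y => ln (cosh y)) (th x).
Proof.
have := @is_derive1_comp R (@ln R) (@cosh R) x (cosh x)^-1 (sh x) _ _.
rewrite /th mulrC; apply.
  exact: is_derive1_ln (cosh_gt0 x).
exact: der_cosh.
Qed.

Lemma der_th0 : is_derive (0:R) 1 th 1.
Proof.
have hV := @is_deriveV R (@cosh R) 0 (sh 0) 1 (lt0r_neq0 (cosh_gt0 0)) (der_cosh 0).
have := @is_deriveM R R sh (fun y => (cosh y)^-1) 0 1 _ _ (der_sh 0) hV.
have e : (sh * (fun y => (cosh y)^-1)) = th by apply/funext => y.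
rewrite e => h; apply: is_derive_eq h _.
have sh0 : sh 0 = 0 by rewrite /sh oppr0 subrr mul0r.
have ch0 : cosh 0 = 1 :> R by rewrite /cosh oppr0 expR0 divff.
by rewrite sh0 ch0 scaler0 scale0r add0r invr1 scale1r.
Qed.

End An.
Arguments der_lncosh {R}.
Arguments sh {R}.
Arguments th {R}.
Arguments der_th0 {R}.

Section Der2.
Variable R : realType.

Lemma der_lin (c d x : R) : is_derive x 1 (fun h : R => h * c + d) c.
Proof.
have h := is_deriveD (is_deriveZ c (is_derive_id x (1:R))) (is_derive_cst d x 1).
have -> : (fun h : R => h * c + d) = (c \*: id + cst d).
  by apply/funext => y /=; rewrite mulrC.
by apply: is_derive_eq h _; rewrite addr0 /GRing.scale /= mulr1.
Qed.

Lemma der_comp_lin (f : R -> R) (c d a : R) :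
  is_derive d 1 f a -> is_derive (0:R) 1 (fun h => f (h * c + d)) (a * c).
Proof.
move=> hf; have hf' : is_derive ((fun h : R => h * c + d) 0) 1 f a.
  by rewrite /= mul0r add0r.
exact (@is_derive1_comp R f (fun h => h * c + d) 0 a c hf' (der_lin c d 0)).
Qed.

Lemma der_quad (a b c d : R) :
  is_derive (0:R) 1 (fun h : R => h * (h * a + b) + (h * c + d)) (b + c).
Proof.
have h1 := is_deriveM (is_derive_id (0:R) 1) (der_lin a b 0).
have h := is_deriveD h1 (der_lin c d 0).
have -> : (fun h : R => h * (h * a + b) + (h * c + d)) =
   ((id * (fun h : R => h * a + b)) + (fun h => h * c + d)).
  by apply/funext => y.
apply: is_derive_eq h _.
by rewrite scale0r mul0r !add0r /GRing.scale /= mulr1.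
Qed.

Lemma der_sum n (F : 'I_n -> R -> R) (dF : 'I_n -> R) (x : R) :
  (forall k, is_derive x 1 (F k) (dF k)) ->
  is_derive x 1 (fun h => \sum_(k < n) F k h) (\sum_(k < n) dF k).
Proof.
move=> H; have := is_derive_sum H.
by rewrite fct_sumE.
Qed.

End Der2.
Arguments der_lin {R}.
Arguments der_comp_lin {R f} c {d a}.
Arguments der_quad {R}.
Arguments der_sum {R n F dF x}.

Section Mx.
Variable R : realType.
Variable n : nat.
Implicit Types (M : 'M[R]_n) (u w y : 'cV[R]_n).

Definition bf M u w : R := (u^T *m M *m w) 0 0.

Lemma bfDl M (t : R) u y w : bf M (t *: u + y) w = t * bf M u w + bf M y w.
Proof. by rewrite /bf linearD linearZ /= !mulmxDl -!scalemxAl !mxE. Qed.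

Lemma bfDr M (t : R) u y w : bf M u (t *: w + y) = t * bf M u w + bf M u y.
Proof. by rewrite /bf !mulmxDr -!scalemxAr !mxE. Qed.

Lemma bfZl M (t : R) u w : bf M (t *: u) w = t * bf M u w.
Proof. by rewrite /bf linearZ /= -!scalemxAl !mxE. Qed.

Lemma bfZr M (t : R) u w : bf M u (t *: w) = t * bf M u w.
Proof. by rewrite /bf -!scalemxAr !mxE. Qed.

Lemma bf0l M w : bf M 0 w = 0.
Proof. by rewrite /bf trmx0 !mul0mx mxE. Qed.

Lemma bf0r M w : bf M w 0 = 0.
Proof. by rewrite /bf mulmx0 mxE. Qed.

Lemma bf_e M a b : bf M (ebasis n a) (ebasis n b) = M a b.
Proof. by rewrite /bf /ebasis trmx_delta -rowE -colE !mxE. Qed.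

Lemma der_main (q : R -> R) (dq : R) (F : 'I_n -> R -> R) (dF : 'I_n -> R) :
  is_derive (0:R) 1 q dq -> (forall k, is_derive (0:R) 1 (F k) (dF k)) ->
  is_derive (0:R) 1 (fun h => 2^-1 * q h - \sum_(k < n) F k h)
     (2^-1 * dq - \sum_(k < n) dF k).
Proof.
move=> Hq HF; have H := is_deriveB (is_deriveZ 2^-1 Hq) (der_sum HF).
have -> : (fun h => 2^-1 * q h - \sum_(k < n) F k h) =
  (2^-1 \*: q - (fun h => \sum_(k < n) F k h)) by apply/funext.
exact: H.
Qed.

Definition phiM M (x : 'cV[R]_n) :=
  2^-1 * bf M x x - \sum_(k < n) ln (cosh (bf M x (ebasis n k))).

Definition G1 M j (y : 'cV[R]_n) :=
  2^-1 * (bf M (ebasis n j) y + bf M y (ebasis n j))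
  - \sum_(k < n) th (bf M y (ebasis n k)) * bf M (ebasis n j) (ebasis n k).

Lemma D1 M j y : 'D_(ebasis n j) (phiM M) y = G1 M j y.
Proof.
rewrite Dline; set e := ebasis n j.
have -> : (fun h : R => phiM M (h *: e + y)) =
  (fun h => 2^-1 * (h * (h * bf M e e + bf M e y) + (h * bf M y e + bf M y y))
     - \sum_(k < n) (fun k h => ln (cosh (h * bf M e (ebasis n k) + bf M y (ebasis n k)))) k h).
  apply/funext => h; rewrite /phiM bfDl !bfDr.
  by congr (_ - _); apply: eq_bigr => k _; rewrite bfDl.
have H := der_main _ _ _ _ (der_quad (bf M e e) (bf M e y) (bf M y e) (bf M y y))
  (fun k => der_comp_lin (bf M e (ebasis n k)) (der_lncosh (bf M y (ebasis n k)))).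
rewrite (@derive_val _ _ _ _ _ _ _ H).
by [].
Qed.

Lemma der_mulc (f : R -> R) (a c : R) :
  is_derive (0:R) 1 f a -> is_derive (0:R) 1 (fun h => f h * c) (a * c).
Proof.
move=> H; have H2 := is_deriveZ c H.
have -> : (fun h => f h * c) = c \*: f by apply/funext => h /=; rewrite mulrC.
by apply: is_derive_eq H2 _; rewrite /GRing.scale /= mulrC.
Qed.

Lemma D2 M i j : 'D_(ebasis n i) (G1 M j) 0 =
  2^-1 * (M j i + M i j) - \sum_(k < n) M i k * M j k.
Proof.
rewrite Dline; set e := ebasis n i.
have -> : (fun h : R => G1 M j (h *: e + 0)) =
  (fun h => 2^-1 * (h * (bf M (ebasis n j) e + bf M e (ebasis n j)) + 0)
     - \sum_(k < n) (fun k h => th (h * bf M e (ebasis n k) + 0) * bf M (ebasis n j) (ebasis n k)) k h).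
  apply/funext => h; rewrite /G1 !addr0 bfZl bfZr -mulrDr.
  by congr (_ - _); apply: eq_bigr => k _; rewrite bfZl addr0.
have H := der_main _ _ _ _ (der_lin (bf M (ebasis n j) e + bf M e (ebasis n j)) 0 0)
  (fun k => der_mulc _ _ (bf M (ebasis n j) (ebasis n k)) (der_comp_lin (bf M e (ebasis n k)) der_th0)).
etransitivity; first exact: (@derive_val _ _ _ _ _ _ _ H).
rewrite !bf_e; congr (_ - _); apply: eq_bigr => k _.
by rewrite !bf_e mul1r.
Qed.

End Mx.
Arguments bf {R n}.
Arguments phiM {R n}.
Arguments G1 {R n}.

Section Quad.
Variable R : realType.
Variable n : nat.
Implicit Types (u v w x y : 'cV[R]_n).

Definition ip u w : R := (u^T *m w) 0 0.

Lemma ipDl x y w : ip (x + y) w = ip x w + ip y w.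
Proof. by rewrite /ip linearD /= mulmxDl mxE. Qed.
Lemma ipDr x y w : ip w (x + y) = ip w x + ip w y.
Proof. by rewrite /ip mulmxDr mxE. Qed.
Lemma ipZl (a : R) x w : ip (a *: x) w = a * ip x w.
Proof. by rewrite /ip linearZ /= -scalemxAl mxE. Qed.
Lemma ipZr (a : R) x w : ip w (a *: x) = a * ip w x.
Proof. by rewrite /ip -scalemxAr mxE. Qed.
Lemma ipC x y : ip x y = ip y x.
Proof.
rewrite /ip -[LHS]/((x^T *m y) 0 0) -{1}[x^T *m y]trmxK trmx_mul trmxK.
by rewrite mxE.
Qed.
Lemma ipNl x w : ip (- x) w = - ip x w.
Proof. by rewrite -scaleN1r ipZl mulN1r. Qed.

Lemma ip_ge0 x : 0 <= ip x x.
Proof.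
rewrite /ip mxE; apply: sumr_ge0 => k _; rewrite mxE; exact: mulr_ge0 (le_refl _) _ || nra.
Qed.

End Quad.
Arguments ip {R n}.
Arguments ip_ge0 {R n}.

Section Main.
Variable R : realType.
Variable n : nat.
Variables alpha beta : R.
Implicit Types (u v w x y : 'cV[R]_n).

Lemma ip_gt0 v : v != 0 -> 0 < ip v v.
Proof.
move=> nz.
have E : ip v v = \sum_k v k 0 * v k 0.
  by rewrite /ip mxE; apply: eq_bigr => k _; rewrite mxE.
rewrite lt_def ip_ge0 andbT E; apply: contra nz => /eqP H0.
have H : forall k : 'I_n, true -> v k 0 * v k 0 = 0.
  by apply: psumr_eq0P H0 => k _; nra.
apply/eqP/matrixP => i j; rewrite (ord1 j) mxE.
have /eqP := H i isT.
by rewrite mulf_eq0 orbb => /eqP.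
Qed.

Definition sg : 'S_n := perm (@ordS_inj n).
Local Notation P := (shift_mx n : 'M[R]_n).
Local Notation A := (circA n alpha beta).

Lemma shift_perm : P = perm_mx sg.
Proof. by apply/matrixP => i j; rewrite /perm_mx !mxE permE eq_sym. Qed.

Lemma PtP : P^T *m P = 1%:M.
Proof. by rewrite shift_perm tr_perm_mx -perm_mxM mulVg perm_mx1. Qed.
Lemma PPt : P *m P^T = 1%:M.
Proof. by rewrite shift_perm tr_perm_mx -perm_mxM mulgV perm_mx1. Qed.

Lemma A_sym : A^T = A.
Proof.
by rewrite /circA linearD /= tr_scalar_mx linearZ /= linearD /= trmxK [(shift_mx n)^T + _]addrC.
Qed.

Lemma ipP u w : ip (P *m u) (P *m w) = ip u w.
Proof. by rewrite /ip trmx_mul -mulmxA (mulmxA P^T) PtP mul1mx. Qed.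
Lemma ipPt u w : ip (P^T *m u) (P^T *m w) = ip u w.
Proof. by rewrite /ip trmx_mul trmxK -mulmxA (mulmxA P) PPt mul1mx. Qed.
Lemma ip_shift u w : ip u (P^T *m w) = ip (P *m u) w.
Proof. by rewrite /ip trmx_mul mulmxA. Qed.

Definition Qf v := (v^T *m (A - A *m A) *m v) 0 0.

Lemma Qform v :
  let X := ip v v in let s := ip (P *m v) v in let c := ip (P *m v) (P^T *m v) in
  let mu := beta + 2 * alpha in let m := beta - 2 * alpha in
  Qf v = (X + s) * (mu * (1 - mu)) / 2 + (X - s) * (m * (1 - m)) / 2
         + 2 * alpha ^+ 2 * (X - c).
Proof.
move=> X s c mu m.
have sub11 : forall (M N : 'M[R]_1), (M - N) 0 0 = M 0 0 - N 0 0 by move=> M N; rewrite !mxE.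
rewrite /Qf mulmxBr mulmxBl sub11 -mulmxA -/(ip v (A *m v)).
rewrite [v^T *m (A *m A)]mulmxA -[v^T *m A *m A *m v]mulmxA.
have -> : v^T *m A = (A *m v)^T by rewrite trmx_mul A_sym.
rewrite -/(ip (A *m v) (A *m v)).
have Av : A *m v = beta *: v + alpha *: (P *m v + P^T *m v).
  by rewrite /circA mulmxDl mul_scalar_mx -scalemxAl mulmxDl.
rewrite Av; set u := P *m v; set w := P^T *m v.
rewrite !ipDl !ipDr !ipZl !ipZr !ipDl !ipDr.
have h1 : ip u u = X by rewrite ipP.
have h2 : ip w w = X by rewrite ipPt.
have h3 : ip v w = s by rewrite ip_shift.
have h4 : ip w v = s by rewrite ipC ip_shift.
have h5 : ip v u = s by rewrite ipC.
have h6 : ip w u = c by rewrite ipC.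
rewrite h1 h2 h3 h4 h5 h6 -/X -/c.
by rewrite -/s /mu /m; field.
Qed.


Lemma A_e a b : A a b = A b a.
Proof. by rewrite -{1}A_sym mxE. Qed.

Lemma hess_eq : hessian n (phiN n alpha beta) 0 = A - A *m A.
Proof.
apply/matrixP => i j; rewrite [LHS]mxE.
have -> : (fun y => 'D_(ebasis n j) (phiN n alpha beta) y) = G1 A j.
  by apply/funext => y; exact (@D1 R n A j y).
rewrite (@D2 R n) (A_e j i).
set B := circA n alpha beta.
rewrite !mxE; congr (_ - _); last first.
  apply: eq_bigr => k _; by rewrite (A_e j k).
have h2 : forall x : R, 2^-1 * (x + x) = x by move=> x; field.
exact: h2.
Qed.

Lemma bounds v : let X := ip v v in let s := ip (P *m v) v in
  let c := ip (P *m v) (P^T *m v) in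
  [/\ - X <= s, s <= X & c <= X].
Proof.
move=> X s c; set u := P *m v; set w := P^T *m v.
have h1 : ip u u = X by rewrite ipP.
have h2 : ip w w = X by rewrite ipPt.
have h5 : ip v u = s by rewrite ipC.
have h6 : ip w u = c by rewrite ipC.
have g1 := ip_ge0 (v + u); have g2 := ip_ge0 (v + (-1) *: u).
have g3 := ip_ge0 (u + (-1) *: w).
rewrite !ipDl !ipDr !ipZl !ipZr ?ipDl ?ipDr h1 ?h2 ?h5 ?h6 -/s -/X -/c in g1 g2 g3.
split; lra.
Qed.

End Main.

Lemma real_part (R : realType) (a b X s c : R) :
  0 < 2 * a -> 2 * a < b -> 0 <= X -> - X <= s -> s <= X -> c <= X ->
  let Q := (X + s) * ((b + 2 * a) * (1 - (b + 2 * a))) / 2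
          + (X - s) * ((b - 2 * a) * (1 - (b - 2 * a))) / 2 + 2 * a ^+ 2 * (X - c) in
  (b + 2 * a < 1 -> 0 < X -> 0 < Q) /\ (b + 2 * a = 1 -> 0 <= Q).
Proof.
move=> a0 ab X0 s1 s2 cX Q.
have t3 : 0 <= 2 * a ^+ 2 * (X - c) by apply: mulr_ge0; [nra | lra].
split.
- move=> mu1 Xp.
  have p1 : 0 < (b + 2 * a) * (1 - (b + 2 * a)) by apply: mulr_gt0; lra.
  have p2 : 0 < (b - 2 * a) * (1 - (b - 2 * a)) by apply: mulr_gt0; lra.
  have q1 : 0 <= (X + s) * ((b + 2 * a) * (1 - (b + 2 * a))) by apply: mulr_ge0; lra.
  have q2 : 0 <= (X - s) * ((b - 2 * a) * (1 - (b - 2 * a))) by apply: mulr_ge0; lra.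
  have [s0|s0] := lerP 0 s.
    have q1' : 0 < (X + s) * ((b + 2 * a) * (1 - (b + 2 * a))) by apply: mulr_gt0; lra.
    rewrite /Q; lra.
  have q2' : 0 < (X - s) * ((b - 2 * a) * (1 - (b - 2 * a))) by apply: mulr_gt0; lra.
  rewrite /Q; lra.
- move=> mu1.
  have q2 : 0 <= (X - s) * ((b - 2 * a) * (1 - (b - 2 * a))) by apply: mulr_ge0; [lra | apply: mulr_ge0; lra].
  rewrite /Q mu1 subrr mulr0 mulr0 mul0r add0r; lra.
Qed.


Theorem lemma4p2 (R : realType) (n : nat) (alpha beta : R) :
  (0 < n)%N -> 0 < 2 * alpha -> 2 * alpha < beta ->
  let H := hessian n (phiN n alpha beta) 0 in
  [/\ beta + 2 * alpha < 1 -> posdef n H,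
      beta + 2 * alpha = 1 -> possemidef n H
    & 1 < beta + 2 * alpha -> ~ posdef n H /\ ~ possemidef n H].
Proof.
move=> n0 a0 ab H; rewrite /H hess_eq.
have key : forall v : 'cV[R]_n, 
  let X := ip v v in let s := ip (shift_mx n *m v) v in
  let c := ip (shift_mx n *m v) ((shift_mx n)^T *m v) in
  (v^T *m (circA n alpha beta - circA n alpha beta *m circA n alpha beta) *m v) 0 0 =
  (X + s) * ((beta + 2 * alpha) * (1 - (beta + 2 * alpha))) / 2
  + (X - s) * ((beta - 2 * alpha) * (1 - (beta - 2 * alpha))) / 2
  + 2 * alpha ^+ 2 * (X - c).
  by move=> v; exact (@Qform R n alpha beta v).
split.
- move=> mu1 v nz; rewrite key.
  have [s1 s2 cX] := @bounds R n v.
  have Xp := @ip_gt0 R n _ nz.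
  have [P1 _] := @real_part R _ _ _ _ _ a0 ab (ltW Xp) s1 s2 cX.
  exact: P1.
- move=> mu1 v; rewrite key.
  have [s1 s2 cX] := @bounds R n v.
  have [_ P2] := @real_part R _ _ _ _ _ a0 ab (ip_ge0 v) s1 s2 cX.
  exact: P2.
- move=> mu1.
  set v : 'cV[R]_n := const_mx 1.
  have Pv : shift_mx n *m v = v.
    by rewrite (@shift_perm R n) -row_permE row_perm_const.
  have Ptv : (shift_mx n)^T *m v = v.
    by rewrite (@shift_perm R n) tr_perm_mx -row_permE row_perm_const.
  have Xv : ip v v = n%:R.
    rewrite /ip mxE (eq_bigr (fun=> 1)) => [|k _]; last by rewrite !mxE mulr1.
    by rewrite sumr_const card_ord.
  have nz : v != 0.
    apply/eqP => /matrixP /(_ (Ordinal n0) 0); rewrite !mxE => /eqP.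
    by rewrite oner_eq0.
  have Qv : (v^T *m (circA n alpha beta - circA n alpha beta *m circA n alpha beta) *m v) 0 0
     = n%:R * ((beta + 2 * alpha) * (1 - (beta + 2 * alpha))).
    by rewrite key /= Pv Ptv Xv; field.
  have neg : n%:R * ((beta + 2 * alpha) * (1 - (beta + 2 * alpha))) < 0 :> R.
    rewrite pmulr_rlt0 ?ltr0n // pmulr_rlt0; lra.
  split.
    by move=> /(_ v nz); rewrite Qv => /(lt_trans neg); rewrite ltxx.
  by move=> /(_ v); rewrite Qv leNgt neg.
Qed.
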